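(* Let $0\neq g\in\mathbb F_q[z]$, write $g=z^rg_0$ with $r\ge0$ and $g_0(0)\neq0$, and let $d_0=\deg g_0+m$ and $F_{g_0}(z)=P(z)g_0(z)g_0^*(z)$. Let $N\ge0$. Then $h\in V_N$ lies in the radical of the bilinear form $B_{g,N}(h,w)=B_A(gh,gw)$ on $V_N$ (i.e. $B_{g,N}(h,w)=0$ for all $w\in V_N$) if and only if \[ [z^j]\,F_{g_0}(z)h(z)=0\qquad\text{for all } d_0\le j\le d_0+N. \] In particular, $\dim\operatorname{rad}(B_{g,N})=\dim\operatorname{rad}(B_{g_0,N})$.
   Context: $q$ is an odd prime power; fix $m\ge0$, $c_0,\dots,c_m\in\mathbb F_q$ with $c_m\ne0$, $A(z)=c_0+\tfrac12\sum_{\ell=1}^m c_\ell(z^\ell+z^{-\ell})$ and $P(z)=z^mA(z)\in\mathbb F_q[z]$. $B_A(f,h)=\operatorname{CT}\,A(z)f(z)h(z^{-1})$ for polynomials $f,h$, where $\operatorname{CT}$ is the constant term of a Laurent polynomial. $V_N$ is the space of polynomials of degree $\le N$, $[z^j]F$ is the coefficient of $z^j$ in $F$, and for $g_0$ of degree $k_0$, $g_0^*(z)=z^{k_0}g_0(z^{-1})$. *)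

(* Defs.v *)
From HB Require Import structures.
From mathcomp Require Import all_boot all_order all_algebra all_field.
Set Implicit Arguments. Unset Strict Implicit. Unset Printing Implicit Defensive.
Import Order.TTheory GRing.Theory Num.Theory.
Local Open Scope ring_scope.

(* Coefficient of z^k (k : int) in the Laurent polynomial
   A(z) = c_0 + 1/2 sum_{l=1}^m c_l (z^l + z^-l). Only c 0 .. c m are used. *)
Definition Acoef (F : fieldType) (c : nat -> F) (m : nat) (k : int) : F :=
  if (`|k| <= m)%N then (if k == 0 then c 0%N else c `|k|%N / 2) else 0.

(* B_A(f,h) = CT A(z) f(z) h(z^-1), written out coefficientwise:
   the term f_i z^i * h_j z^-j * a_k z^k contributes iff k = j - i. *)
Definition BA (F : fieldType) (c : nat -> F) (m : nat) (f h : {poly F}) : F :=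
  \sum_(i < size f) \sum_(j < size h) f`_i * h`_j * Acoef c m (j%:Z - i%:Z).

(* P(z) = z^m A(z) *)
Definition Ppoly (F : fieldType) (c : nat -> F) (m : nat) : {poly F} :=
  \poly_(i < (2 * m).+1) Acoef c m (i%:Z - m%:Z).

(* g0^*(z) = z^{deg g0} g0(z^-1) *)
Definition recip (F : fieldType) (g0 : {poly F}) : {poly F} :=
  \poly_(i < size g0) g0`_(size g0 - 1 - i).

Definition gram (F : fieldType) (c : nat -> F) (m : nat) (g : {poly F}) (N : nat)
  : 'M[F]_(N.+1) :=
  \matrix_(i < N.+1, j < N.+1) BA c m (g * 'X^i) (g * 'X^j).

(* The radical of B_{g,N} (coefficient row vectors h with h *m gram = 0,
   i.e. B_{g,N}(h,w) = 0 for all w), as a row space. *)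
Definition radmx (F : fieldType) (c : nat -> F) (m : nat) (g : {poly F}) (N : nat)
  : 'M[F]_(N.+1) := kermx (gram c m g N).

(* Main.v *)
Require Import Defs.
From HB Require Import structures.
From mathcomp Require Import all_boot all_order all_algebra all_field.
From mathcomp Require Import zify ring.
Import Order.TTheory GRing.Theory Num.Theory.
Local Open Scope ring_scope.

Lemma sum_widen (V : nmodType) n K (F : nat -> V) : (n <= K)%N ->
  (forall i, (n <= i)%N -> F i = 0) -> \sum_(i < n) F i = \sum_(i < K) F i.
Proof.
move=> nK F0; rewrite -(subnKC nK) big_split_ord /= [X in _ = _ + X]big1 ?addr0 // => i _.
apply: F0; exact: leq_addr.
Qed.

Arguments sum_widen {V n K F}.
Section S.
Variables (F : fieldType) (c : nat -> F) (m : nat).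

Lemma Acoef_out k : (m < `|k|)%N -> Acoef c m k = 0.
Proof. by move=> H; rewrite /Acoef leqNgt H. Qed.

Lemma coefP i : (Ppoly c m)`_i = Acoef c m (i%:Z - m%:Z).
Proof.
rewrite /Ppoly coef_poly; case: ifP => // /negbT; rewrite -leqNgt => H.
rewrite Acoef_out //; lia.
Qed.

Lemma BA_ext (f h : {poly F}) n1 n2 : (size f <= n1)%N -> (size h <= n2)%N ->
  BA c m f h = \sum_(i < n1) \sum_(j < n2) f`_i * h`_j * Acoef c m (j%:Z - i%:Z).
Proof.
move=> H1 H2; rewrite /BA (@sum_widen _ _ n1 (fun i => \sum_(j < size h) f`_i * h`_j * Acoef c m (j%:Z - i%:Z))) //; last first.
  by move=> i hi; apply: big1 => j _; rewrite nth_default // !mul0r.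
apply: eq_bigr => i _; apply: (@sum_widen _ _ _ (fun j => f`_i * h`_j * Acoef c m (j%:Z - i%:Z))) => // j hj.
by rewrite (nth_default _ hj) mulr0 mul0r.
Qed.

Lemma size_Xn_mul r (f : {poly F}) : (size ('X^r * f)%R <= r + size f)%N.
Proof. by rewrite (leq_trans (size_mul_leq _ _)) // size_polyXn. Qed.

Lemma BA_shift r (f h : {poly F}) : BA c m ('X^r * f) ('X^r * h) = BA c m f h.
Proof.
rewrite (BA_ext _ _ _ _ (size_Xn_mul r f) (size_Xn_mul r h)) big_split_ord /=.
rewrite big1 ?add0r; last first.
  by move=> i _; apply: big1 => j _; rewrite coefXnM ltn_ord !mul0r.
rewrite (BA_ext _ _ _ _ (leqnn _) (leqnn _)); apply: eq_bigr => i _.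
rewrite big_split_ord /= big1 ?add0r; last first.
  by move=> j _; rewrite [X in _ * X * _]coefXnM ltn_ord mulr0 mul0r.
apply: eq_bigr => j _; rewrite !coefXnM !ltnNge !leq_addr /= !addKn.
congr (_ * _); congr (Acoef _ _ _); lia.
Qed.

Lemma BA_P (f u : {poly F}) : BA c m f u = \sum_(j < size u) u`_j * (f * Ppoly c m)`_(j + m).
Proof.
rewrite /BA exchange_big /=; apply: eq_bigr => j _.
rewrite coefM mulr_sumr.
transitivity (\sum_(i < (j + m).+1) u`_j * (f`_i * Acoef c m (j%:Z - i%:Z))); last first.
  apply: eq_bigr => i _; rewrite coefP; congr (_ * (_ * Acoef _ _ _)).
  have := ltn_ord i; lia.
rewrite (@sum_widen _ _ (size f + (j+m).+1) (fun i => f`_i * u`_j * Acoef c m (j%:Z - i%:Z))); last first.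
- by move=> i hi; rewrite nth_default // !mul0r.
- exact: leq_addr.
rewrite [RHS](@sum_widen _ _ (size f + (j+m).+1) (fun i => u`_j * (f`_i * Acoef c m (j%:Z - i%:Z)))); last first.
- by move=> i hi; rewrite Acoef_out ?mulr0 //; lia.
- exact: leq_addl.
by apply: eq_bigr => i _; rewrite mulrA [u`_j * _]mulrC.
Qed.

Lemma recipM (Q g0 : {poly F}) n : g0 != 0 ->
  (Q * recip g0)`_(n + (size g0).-1) = \sum_(t < size g0) g0`_t * Q`_(n + t).
Proof.
move=> nz; have sz : size g0 = (size g0).-1.+1 by rewrite prednK // size_poly_gt0.
rewrite coefMr.
rewrite -(@sum_widen _ (size g0) _ (fun j => Q`_(n + (size g0).-1 - j) * (recip g0)`_j)); last first.
- by move=> i hi; rewrite /recip coef_poly ltnNge hi /= mulr0.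
- by rewrite {1}sz ltnS leq_addl.
rewrite [in RHS]sz (reindex_inj rev_ord_inj) /= -sz.
apply: eq_bigr => i _; rewrite /recip coef_poly /=.
have hi := ltn_ord i; rewrite ifT; last by lia.
rewrite mulrC; congr (_ * _); congr (_`_ _); lia.
Qed.

Lemma sum_prod (p q : {poly F}) (R : nat -> F) :
  \sum_(j < size (p * q)) (p * q)`_j * R j =
  \sum_(s < size q) q`_s * \sum_(t < size p) p`_t * R (t + s)%N.
Proof.
rewrite (@sum_widen _ _ (size p + size q) (fun j => (p * q)`_j * R j)); last first.
- by move=> i hi; rewrite nth_default // mul0r.
- by rewrite (leq_trans (size_mul_leq _ _)) // leq_pred.
under eq_bigr => j _ do
  rewrite -{1}(coefK p) poly_def mulr_suml coef_sum mulr_suml.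
rewrite exchange_big /=.
under [RHS]eq_bigr => s _ do rewrite mulr_sumr.
rewrite [RHS]exchange_big /=; apply: eq_bigr => t _.
have ht : (t <= size p + size q)%N by rewrite (leq_trans (ltnW (ltn_ord t))) ?leq_addr.
rewrite -(subnKC ht) big_split_ord /= big1 ?add0r; last first.
  by move=> j _; rewrite -scalerAl coefZ coefXnM ltn_ord mulr0 mul0r.
rewrite [RHS](@sum_widen _ (size q) (size p + size q - t) (fun i => q`_i * (p`_t * R (t + i)%N))); last first.
- by move=> i hi; rewrite nth_default // mul0r.
- move: (ltn_ord t) => H; apply: (@leq_trans (size p + size q - size p)); [by rewrite addKn | exact: leq_sub2l (ltnW H)].
apply: eq_bigr => s _; rewrite -scalerAl coefZ coefXnM ltnNge leq_addr /= addKn.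
by rewrite mulrA [_ * q`_s]mulrC -mulrA.
Qed.

Lemma BA_key (g0 h w : {poly F}) : g0 != 0 ->
  BA c m (g0 * h) (g0 * w) =
  \sum_(s < size w) w`_s * ((Ppoly c m * g0 * recip g0) * h)`_(s + ((size g0).-1 + m)).
Proof.
move=> nz; rewrite BA_P (sum_prod g0 w (fun j => (g0 * h * Ppoly c m)`_(j + m))); apply: eq_bigr => s _; congr (_ * _).
have -> : Ppoly c m * g0 * recip g0 * h = (g0 * h * Ppoly c m) * recip g0.
  by ring.
have -> : (s + ((size g0).-1 + m) = (s + m) + (size g0).-1)%N by lia.
rewrite recipM //; apply: eq_bigr => t _; congr (_ * _`_ _); lia.
Qed.

End S.

Theorem lemma5p1 (F : finFieldType) (Hodd : odd #|F|)
  (m : nat) (c : nat -> F) (hcm : c m != 0)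
  (g : {poly F}) (r : nat) (g0 : {poly F})
  (hg0 : g != 0) (hg : g = 'X^r * g0) (hg00 : g0`_0 != 0)
  (N : nat) :
  let d0 := ((size g0).-1 + m)%N in
  let Fg0 := Ppoly c m * g0 * recip g0 in
  (forall h : {poly F}, (size h <= N.+1)%N ->
     ((forall w : {poly F}, (size w <= N.+1)%N -> BA c m (g * h) (g * w) = 0)
      <-> (forall j : nat, (d0 <= j <= d0 + N)%N -> (Fg0 * h)`_j = 0)))
  /\ \rank (radmx c m g N) = \rank (radmx c m g0 N).
Proof.
move=> d0 Fg0.
have nz : g0 != 0 by apply/eqP => g00; move: hg0; rewrite hg g00 mulr0 eqxx.
have E h w : BA c m (g * h) (g * w) = BA c m (g0 * h) (g0 * w).
  by rewrite hg -!mulrA BA_shift.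
split; last first; rewrite ?/radmx.
  have -> // : gram c m g N = gram c m g0 N.
  by apply/matrixP => i j; rewrite !mxE E.
move=> h hs; split.
- move=> H j /andP [j1 j2].
  have := H ('X^(j - d0)); rewrite size_polyXn ltnS leq_subLR E BA_key //.
  rewrite size_polyXn big_ord_recr /= big1 ?add0r; last first.
    by move=> i _; have hi := ltn_ord i; rewrite coefXn /= (ltn_eqF hi) mul0r.
  by rewrite coefXn eqxx mul1r subnK // => ->.
- move=> H w hw; rewrite E BA_key //; apply: big1 => s _.
  rewrite H ?mulr0 //; move: (ltn_ord s) hw; move: (nat_of_ord s) => k; move: (size w) => n; rewrite /d0; move: (size g0).-1 => a; lia.
Qed.
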